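(* Let $\mathcal{H}$ be a Hilbert space of finite dimension $d\geq 2$ with orthonormal basis $\{\phi_k\}_{k=1}^d$. Define the instrument $\mathcal{I}$ on $\Omega=\{0,1\}$ by $\mathcal{I}_\omega(T)=L_\omega^* T L_\omega$, where $L_0=|\phi_d\rangle\langle\phi_d|$ and $L_1=\sum_{k=1}^{d-1}|\phi_{k+1}\rangle\langle\phi_k|$. Then: (a) If $1\leq n\leq d-1$, then $\mathsf{A}^\mathcal{I}_n\simeq\mathsf{P}_n$, where $\mathsf{P}_n$ is the sharp observable on $\{1,\ldots,n+1\}$ given by $\mathsf{P}_n(1)=\sum_{l=1}^{d-n}|\phi_l\rangle\langle\phi_l|$ and $\mathsf{P}_n(j)=|\phi_{d-n+j-1}\rangle\langle\phi_{d-n+j-1}|$ for $2\leq j\leq n+1$. (b) If $n\geq d-1$, then $\mathsf{A}^\mathcal{I}_n\simeq\mathsf{P}_{d-1}$, where $\mathsf{P}_{d-1}(j)=|\phi_j\rangle\langle\phi_j|$ for $1\leq j\leq d$.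
   Context: An observable with finite outcome set is a map $\omega\mapsto\mathsf{A}(\omega)$ into positive operators summing to $\mathbb{1}$; it is sharp if each $\mathsf{A}(\omega)$ is a projection. For finite-outcome observables, $\mathsf{A}\preceq\mathsf{B}$ means there is $\kappa:\Omega_\mathsf{A}\times\Omega_\mathsf{B}\to[0,1]$ with $\sum_\omega\kappa(\omega|\omega')=1$ for all $\omega'$ and $\mathsf{A}(\omega)=\sum_{\omega'}\kappa(\omega|\omega')\mathsf{B}(\omega')$; $\mathsf{A}\simeq\mathsf{B}$ means both $\mathsf{A}\preceq\mathsf{B}$ and $\mathsf{B}\preceq\mathsf{A}$. For an instrument $\mathcal{I}$, $\mathsf{A}^\mathcal{I}_n$ is the observable on $\Omega^n$ with $\mathsf{A}^\mathcal{I}_n(\omega_1,\ldots,\omega_n)=\mathcal{I}_{\omega_1}\circ\cdots\circ\mathcal{I}_{\omega_n}(\mathbb{1})$. *)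

(* Defs.v *)
(* operators on a d-dimensional complex Hilbert space are
   d x d matrices over algC (algebraic complex numbers, with conjugation). *)
From mathcomp Require Import all_boot all_order all_algebra all_field.
Set Implicit Arguments. Unset Strict Implicit. Unset Printing Implicit Defensive.
Import Order.TTheory GRing.Theory Num.Theory.
Local Open Scope ring_scope.

Definition adj (m n : nat) (A : 'M[algC]_(m, n)) : 'M[algC]_(n, m) :=
  \matrix_(i, j) (A j i)^*.

Definition ketbra (d : nat) (u v : 'cV[algC]_d) : 'M[algC]_d := u *m adj v.

Definition orthonormal_basis (d : nat) (U : 'M[algC]_d) : Prop :=
  forall i j : 'I_d, \sum_(k < d) (U k i)^* * U k j = (i == j)%:R.

(* phi_k (0-indexed: k : 'I_d corresponds to phi_{k+1} of the paper) *)
Definition phi (d : nat) (U : 'M[algC]_d) (k : 'I_d) : 'cV[algC]_d := col k U.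

Definition postproc (d : nat) (OA OB : finType)
    (A : OA -> 'M[algC]_d) (B : OB -> 'M[algC]_d) : Prop :=
  exists kappa : OA -> OB -> algC,
    [/\ forall a b, 0 <= kappa a b <= 1,
        forall b, \sum_a kappa a b = 1 &
        forall a, A a = \sum_b kappa a b *: B b].

Definition obs_equiv (d : nat) (OA OB : finType)
    (A : OA -> 'M[algC]_d) (B : OB -> 'M[algC]_d) : Prop :=
  postproc A B /\ postproc B A.

(* Kraus operators: outcome false = 0, true = 1 (paper's 1-indexed phi_k
   is our 0-indexed phi U (k-1)). *)
Definition L0 (d : nat) (U : 'M[algC]_d) : 'M[algC]_d :=
  \sum_(k < d | k.+1 == d) ketbra (phi U k) (phi U k).

Definition L1 (d : nat) (U : 'M[algC]_d) : 'M[algC]_d :=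
  \sum_(k < d) \sum_(l < d | val l == k.+1) ketbra (phi U l) (phi U k).

Definition Lop (d : nat) (U : 'M[algC]_d) (w : bool) : 'M[algC]_d :=
  if w then L1 U else L0 U.

Definition instr (d : nat) (U : 'M[algC]_d) (w : bool) (T : 'M[algC]_d)
  : 'M[algC]_d := adj (Lop U w) *m T *m Lop U w.

Definition An (d : nat) (U : 'M[algC]_d) (n : nat) (w : n.-tuple bool)
  : 'M[algC]_d := foldr (instr U) 1%:M (tval w).

(* P_n on outcomes {1,...,n+1}, represented by j : 'I_n.+1 (j = paper's j - 1):
   P_n(1) = sum_{l=1}^{d-n} |phi_l><phi_l|,
   P_n(j) = |phi_{d-n+j-1}><phi_{d-n+j-1}| for 2 <= j <= n+1. *)
Definition Pn (d : nat) (U : 'M[algC]_d) (n : nat) (j : 'I_n.+1) : 'M[algC]_d :=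
  if val j == 0%N then \sum_(l < d | (l < d - n)%N) ketbra (phi U l) (phi U l)
  else \sum_(l < d | val l == (d - n + j - 1)%N) ketbra (phi U l) (phi U l).
Arguments An d U n w : clear implicits.
Arguments Pn d U n j : clear implicits.

(* Main.v *)
Require Import Defs.
From mathcomp Require Import all_boot all_order all_algebra all_field.
From mathcomp Require Import zify.
Import Order.TTheory GRing.Theory Num.Theory.
Set Implicit Arguments. Unset Strict Implicit. Unset Printing Implicit Defensive.
Local Open Scope ring_scope.

Lemma adjM (m n p : nat) (A : 'M[algC]_(m, n)) (B : 'M[algC]_(n, p)) :
  adj (A *m B) = adj B *m adj A.
Proof.
apply/matrixP => a b; rewrite !mxE rmorph_sum; apply: eq_bigr => k _.
by rewrite !mxE rmorphM mulrC.
Qed.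

Lemma adjK (m n : nat) (A : 'M[algC]_(m, n)) : adj (adj A) = A.
Proof. by apply/matrixP => a b; rewrite !mxE conjCK. Qed.

Lemma adj_sum (m n : nat) (I : Type) (r : seq I) (P : pred I) (F : I -> 'M[algC]_(m, n)) :
  adj (\sum_(i <- r | P i) F i) = \sum_(i <- r | P i) adj (F i).
Proof.
apply/matrixP => a b; rewrite !mxE summxE rmorph_sum summxE.
by apply: eq_bigr => i _; rewrite mxE.
Qed.

Section Basis.
Variables (d : nat) (U : 'M[algC]_d).
Hypothesis hU : orthonormal_basis U.

Definition Eb (i j : 'I_d) := ketbra (phi U i) (phi U j).

Lemma adj_col_mul i j : adj (phi U i) *m phi U j = (i == j)%:R%:M.
Proof.
apply/matrixP => a b; rewrite !ord1 !mxE.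
under eq_bigr do rewrite !mxE.
by rewrite hU mulr1n.
Qed.

Lemma EbM i j k l : Eb i j *m Eb k l = (j == k)%:R *: Eb i l.
Proof.
by rewrite /Eb /ketbra -mulmxA (mulmxA (adj _)) adj_col_mul mul_scalar_mx scalemxAr.
Qed.

Lemma adjEb i j : adj (Eb i j) = Eb j i.
Proof. by rewrite /Eb /ketbra adjM adjK. Qed.

Lemma sumEb : \sum_k Eb k k = 1%:M.
Proof.
have h1 : adj U *m U = 1%:M.
  apply/matrixP => a b; rewrite !mxE.
  under eq_bigr do rewrite mxE.
  by rewrite hU.
have h2 := mulmx1C h1.
rewrite -h2; apply/matrixP => a b; rewrite summxE !mxE.
apply: eq_bigr => k _; rewrite !mxE big_ord1 !mxE //.
Qed.
End Basis.

Section Dyn.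
Variables (d' : nat) (U : 'M[algC]_d'.+1).
Hypothesis hU : orthonormal_basis U.

Definition ob (j : 'I_d'.+1) : bool := (nat_of_ord j < d')%N.
Definition nx (j : 'I_d'.+1) : 'I_d'.+1 := inord (minn j.+1 d').

Lemma nxE j : nat_of_ord (nx j) = minn j.+1 d'.
Proof. by rewrite /nx inordK //; apply: leq_ltn_trans (geq_minr _ _) _. Qed.

Lemma nx_inj j1 j2 : ob j1 = ob j2 -> nx j1 = nx j2 -> j1 = j2.
Proof.
rewrite /ob => h1 /(congr1 (@nat_of_ord _)); rewrite !nxE => h2; apply: ord_inj.
have := ltn_ord j1; have := ltn_ord j2.
move=> X Y; move: h1 h2; case: ltnP => a; case: ltnP => b //= _; lia.
Qed.

Lemma valordE n (i : 'I_n) : val i = nat_of_ord i.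
Proof. by []. Qed.

Lemma LopE w : Lop U w = \sum_(j | ob j == w) Eb U (nx j) j.
Proof.
case: w => /=.
- rewrite /L1 [RHS]big_mkcond /=; apply: eq_bigr => k _.
  case: ifP => hk.
  + rewrite (eq_bigl (fun l => l == nx k)); first by rewrite big_pred1_eq.
    move=> l; move: hk; rewrite /ob => hk.
    apply/eqP/eqP => [h|->]; last by rewrite nxE; lia.
    by apply: ord_inj; rewrite nxE; lia.
  + rewrite big_pred0 // => l; move: hk; rewrite /ob => hk.
    have := ltn_ord l; have := ltn_ord k; move=> *; apply/eqP; lia.
- rewrite /L0; apply: eq_big => k.
  + have := ltn_ord k; rewrite /ob eqSS; case: ltnP => h /= h'; case: eqP => e //; lia.
  + move=> /eqP h; congr (Eb U _ k); apply: ord_inj; rewrite nxE; lia.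
Qed.

Lemma instr_lin w (I : Type) (r : seq I) (P : pred I) (F : I -> 'M[algC]_d'.+1) :
  instr U w (\sum_(i <- r | P i) F i) = \sum_(i <- r | P i) instr U w (F i).
Proof. by rewrite /instr mulmx_sumr mulmx_suml. Qed.

Lemma instrE w k :
  instr U w (Eb U k k) = \sum_(j | (ob j == w) && (nx j == k)) Eb U j j.
Proof.
rewrite /instr LopE adj_sum.
under eq_bigr do rewrite adjEb.
rewrite mulmx_suml mulmx_suml big_mkcondr /=.
apply: eq_bigr => j1 hj1.
rewrite mulmx_sumr.
under eq_bigr do rewrite (EbM hU) -scalemxAl (EbM hU) scalerA.
case: (eqVneq (nx j1) k) => [<-|ne].
- rewrite (bigD1 j1) //= eqxx mul1r scale1r big1 ?addr0 // => j2 /andP [hj2 ne].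
  case: (eqVneq (nx j1) (nx j2)) => e; last by rewrite mulr0 scale0r.
  by move: ne; rewrite (nx_inj _ e) ?eqxx // (eqP hj1) (eqP hj2).
- by rewrite big1 // => j2 _; rewrite mul0r scale0r.
Qed.

Fixpoint trj (s : seq bool) (j : 'I_d'.+1) : bool :=
  if s is w :: s' then (ob j == w) && trj s' (nx j) else true.

Lemma foldr_instrE s : foldr (instr U) 1%:M s = \sum_(j | trj s j) Eb U j j.
Proof.
elim: s => [|w s IH] /=; first by rewrite (sumEb hU).
rewrite IH instr_lin.
rewrite (eq_bigr _ (fun i _ => instrE w i)).
rewrite [RHS](partition_big nx (trj s)) /=; last by move=> j /andP[].
apply: eq_bigr => k hk; apply: eq_bigl => j.
by case: (eqVneq (nx j) k) => [->|_]; rewrite ?eqxx ?hk ?andbT ?andbF.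
Qed.

End Dyn.

Lemma postproc_fun d (K OA OB : finType) (E : K -> 'M[algC]_d) (f : K -> OA)
  (g : K -> OB) (h : OB -> OA) (A : OA -> 'M[algC]_d) (B : OB -> 'M[algC]_d) :
  (forall a, A a = \sum_(k | f k == a) E k) ->
  (forall b, B b = \sum_(k | g k == b) E k) ->
  (forall k, f k = h (g k)) -> postproc A B.
Proof.
move=> hA hB fh; exists (fun a b => (h b == a)%:R); split.
- by move=> a b; case: (h b == a); rewrite /= ?lexx ?ler01.
- move=> b; rewrite (bigD1 (h b)) //= eqxx big1 ?addr0 // => a.
  by rewrite eq_sym => /negbTE ->.
- move=> a; rewrite hA (partition_big g xpredT) //=; apply: eq_bigr => b _.
  rewrite hB; case: (eqVneq (h b) a) => [<-|ne].
  + rewrite scale1r; apply: eq_bigl => k.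
    by case: (eqVneq (g k) b) => [<-|_]; rewrite -?fh ?eqxx ?andbF.
  + rewrite scale0r big_pred0 // => k.
    case: (eqVneq (g k) b) => [e|_]; rewrite ?andbF //.
    by rewrite fh e (negbTE ne).
Qed.

Lemma equiv_part d (K OA OB : finType) (E : K -> 'M[algC]_d) (f : K -> OA)
  (g : K -> OB) (k0 : K) (A : OA -> 'M[algC]_d) (B : OB -> 'M[algC]_d) :
  (forall a, A a = \sum_(k | f k == a) E k) ->
  (forall b, B b = \sum_(k | g k == b) E k) ->
  (forall k k', (f k == f k') = (g k == g k')) -> obs_equiv A B.
Proof.
move=> hA hB hfg; split.
- apply: (@postproc_fun _ _ _ _ E f g
    (fun b => if [pick k | g k == b] is Some k then f k else f k0)) => // k.
  case: pickP => [k' /eqP gk|/(_ k)]; last by rewrite eqxx.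
  by apply/eqP; rewrite hfg gk.
- apply: (@postproc_fun _ _ _ _ E g f
    (fun a => if [pick k | f k == a] is Some k then g k else g k0)) => // k.
  case: pickP => [k' /eqP gk|/(_ k)]; last by rewrite eqxx.
  by apply/eqP; rewrite -hfg gk.
Qed.

Section Traj.
Variables (d' : nat) (U : 'M[algC]_d'.+1).
Hypothesis hU : orthonormal_basis U.

Fixpoint trajseq (n : nat) (j : 'I_d'.+1) : seq bool :=
  if n is n'.+1 then ob j :: trajseq n' (nx j) else [::].

Lemma size_trajseq n j : size (trajseq n j) == n.
Proof. by elim: n j => [|n IH] j //=; rewrite eqSS IH. Qed.

Definition ftup n j : n.-tuple bool := Tuple (size_trajseq n j).

Lemma trj_eq s j : trj s j = (trajseq (size s) j == s).
Proof. by elim: s j => [|w s IH] j //=; rewrite eqseq_cons IH eq_sym. Qed.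

Lemma trajseq_eq n l l' :
  (trajseq n l == trajseq n l') = ((l + n - d')%N == (l' + n - d')%N).
Proof.
elim: n l l' => [|n IH] l l' /=.
  have := ltn_ord l; have := ltn_ord l'; move=> X Y; rewrite eqxx; apply/esym/eqP; lia.
rewrite eqseq_cons IH !nxE /ob.
have := ltn_ord l; have := ltn_ord l'.
move=> X Y; case: (ltnP l d') => a; case: (ltnP l' d') => b /=.
all: first [by apply/esym/eqP; lia | by apply/eqP/eqP => h; lia].
Qed.

Lemma An_E n (w : n.-tuple bool) :
  An d'.+1 U n w = \sum_(j | ftup n j == w) Eb U j j.
Proof.
rewrite /An (foldr_instrE hU); apply: eq_bigl => j.
by rewrite trj_eq size_tuple.
Qed.

Definition gm m (l : 'I_d'.+1) : 'I_m.+1 := inord (l + m - d').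

Lemma gmE m l : (m <= d')%N -> nat_of_ord (gm m l) = (l + m - d')%N.
Proof. by move=> hm; rewrite /gm inordK //; have := ltn_ord l; lia. Qed.

Lemma Pn_E m (hm : (m <= d')%N) j0 :
  Pn d'.+1 U m j0 = \sum_(l | gm m l == j0) Eb U l l.
Proof.
rewrite /Pn; case: ifP => h0; apply: eq_bigl => l.
- move/eqP: h0 => h0; have := ltn_ord l; move=> X.
  rewrite -[RHS]/(nat_of_ord (gm m l) == nat_of_ord j0) gmE // h0.
  case: ltnP => a; case: eqP => e //; lia.
- move/negbT: h0 => h0; have := ltn_ord l; have := ltn_ord j0; move=> X Y.
  rewrite -[RHS]/(nat_of_ord (gm m l) == nat_of_ord j0) gmE //.
  have h1 : (nat_of_ord j0 != 0)%N := h0; clear h0; move/eqP: h1 => h1.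
  change ((nat_of_ord l == (d'.+1 - m + j0 - 1)%N) = ((l + m - d')%N == j0)).
  by case: eqP => e; case: eqP => e' //=; lia.
Qed.

End Traj.

Theorem proposition3 (d : nat) (hd : (2 <= d)%N) (U : 'M[algC]_d)
    (hU : orthonormal_basis U) :
  (forall n : nat, (1 <= n <= d - 1)%N -> obs_equiv (An d U n) (Pn d U n)) /\
  (forall n : nat, (d - 1 <= n)%N -> obs_equiv (An d U n) (Pn d U (d - 1))).
Proof.
case: d hd U hU => [|d'] // hd U hU.
have key : forall n m, (m <= d')%N ->
   (forall l l' : 'I_d'.+1, ((l + n - d')%N == (l' + n - d')%N) =
                            ((l + m - d')%N == (l' + m - d')%N)) ->
   obs_equiv (An d'.+1 U n) (Pn d'.+1 U m).
  move=> n m hm hnm.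
  apply: (@equiv_part _ _ _ _ (fun k => Eb U k k) (@ftup d' n) (@gm d' m) ord0).
  - by move=> a; rewrite (An_E hU).
  - by move=> b; rewrite (Pn_E U hm).
  - move=> k k'.
    rewrite -[LHS]/(trajseq n k == trajseq n k') trajseq_eq hnm.
    by rewrite -[RHS]/(nat_of_ord (gm m k) == nat_of_ord (gm m k')) !gmE.
split.
- move=> n /andP [h1 h2]; apply: key => [|l l']; first lia.
  by [].
- move=> n h; apply: key => [|l l']; first lia.
  have := ltn_ord l; have := ltn_ord l'; move=> X Y.
  by case: eqP => e; case: eqP => e' //=; lia.
Qed.
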